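(* Let $n \geq 1$. The map $\Psi_n$ defined below is a bijection from the set of strong compositions of $n$ onto the set of subsets of $[n-1]$, and whenever $\Psi_n(\alpha) = I$ we have \[ n - \ell(\alpha) = |I| \qquad\text{and}\qquad 2b(\alpha) - \binom{\ell(\alpha)}{2} + \operatorname{coinv}(\alpha) = \binom{n}{2} - \operatorname{Sum}(I). \] Consequently, \[ \sum_{\alpha \vDash n} z^{n-\ell(\alpha)} q^{2b(\alpha) - \binom{\ell(\alpha)}{2} + \operatorname{coinv}(\alpha)} = \sum_{I \subset [n-1]} z^{|I|} q^{\binom{n}{2} - \operatorname{Sum}(I)}. \]
   Context: A strong composition $\alpha \vDash n$ is a sequence $(\alpha_1, \ldots, \alpha_\ell)$ of positive integers summing to $n$; $\ell(\alpha)$ is its length. $\operatorname{coinv}(\alpha) = \#\{1 \leq i < j \leq \ell(\alpha) : \alpha_i < \alpha_j\}$. If $\mu = (\mu_1 \geq \mu_2 \geq \cdots)$ is the weakly decreasing rearrangement of $\alpha$, then $b(\alpha) = \sum_i (i-1)\mu_i$. For $I \subset [n-1]$, $\operatorname{Sum}(I) = \sum_{i \in I} i$. Definition of $\Psi_n$: draw $\alpha$ as a left-justified diagram whose $i$-th row from the top has $\alpha_i$ cells. For $t \geq 1$ let $m_t$ be the number of cells in columns $1, \ldots, t$. For each $t \geq 1$, list the rows $r_1 < r_2 < \cdots < r_p$ (top to bottom) having at least $t$ cells; for each $q \in \{1, \ldots, p\}$ such that row $r_q$ has at least $t+1$ cells, write the number $m_t - (q-1)$ in the cell of row $r_q$ in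 column $t+1$. (Equivalently: fill the second column top to bottom with $m_1, m_1 - 1, \ldots$, skipping missing cells, then delete the first column and empty rows and repeat with maximum $m_2$, and so on.) Then $\Psi_n(\alpha)$ is the set of all numbers written. For example $\Psi_{11}(1,3,2,1,3,1) = \{2,4,5,7,9\}$. *)

(* Defs.v *)
From mathcomp Require Import all_boot all_order all_algebra.
Set Implicit Arguments. Unset Strict Implicit. Unset Printing Implicit Defensive.

Definition is_comp (n : nat) (a : seq nat) : bool :=
  all (fun x => 0 < x) a && (sumn a == n).

Definition coinv (a : seq nat) : nat :=
  \sum_(i < size a) \sum_(j < size a | i < j) (nth 0 a i < nth 0 a j).

(* b(a) = sum_i (i-1) mu_i, mu = weakly decreasing rearrangement (0-indexed here) *)
Definition bstat (a : seq nat) : nat :=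
  let mu := sort geq a in \sum_(i < size mu) i * nth 0 mu i.

(* m_t = number of cells in columns 1..t *)
Definition mcells (a : seq nat) (t : nat) : nat := sumn [seq minn x t | x <- a].

Definition rows_ge (a : seq nat) (t : nat) : seq nat := [seq x <- a | t <= x].

(* numbers written in column t+1: m_t - (q-1) for q (1-indexed) with row r_q of
   length >= t+1; here i = q-1 is 0-indexed. *)
Definition psi_col (a : seq nat) (t : nat) : seq nat :=
  [seq mcells a t - i | i <- iota 0 (size (rows_ge a t)) & t < nth 0 (rows_ge a t) i].

(* all numbers written, for t = 1, 2, ..., sumn a (larger t write nothing) *)
Definition psi_list (a : seq nat) : seq nat :=
  flatten [seq psi_col a t | t <- iota 1 (sumn a)].

(* Psi_n(a) as a subset of {0,...,n-1} (Psi_n(a) is shown to lie in [n-1]). *)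
Definition Psi (n : nat) (a : seq nat) : {set 'I_n} :=
  [set i : 'I_n | val i \in psi_list a].

(* Main.v *)
Require Import Defs.
From mathcomp Require Import all_boot all_order all_algebra.
Import GRing.Theory.
From mathcomp Require Import zify.
Set Implicit Arguments. Unset Strict Implicit. Unset Printing Implicit Defensive.


Definition allpos (a : seq nat) := all (fun x => 0 < x) a.
Definition shrink (a : seq nat) := [seq x.-1 | x <- a & 1 < x].
Definition col1 (a : seq nat) :=
  [seq size a - i | i <- iota 0 (size a) & 1 < nth 0 a i].
Definition psiN (a : seq nat) N := flatten [seq psi_col a t | t <- iota 1 N].

Lemma mem_leq_sumn (a : seq nat) x : x \in a -> x <= sumn a.
Proof.
elim: a => //= y s IH; rewrite in_cons => /orP[/eqP->|/IH]; lia.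
Qed.

Lemma psi_col_nil a t : sumn a <= t -> psi_col a t = [::].
Proof.
move=> h; rewrite /psi_col.
suff -> : [seq i <- iota 0 (size (rows_ge a t)) | t < nth 0 (rows_ge a t) i] = [::] by [].
apply/eqP; rewrite -(negbK (_ == _)) -has_filter; apply/hasP => -[i].
rewrite mem_iota /= => hi.
have : nth 0 (rows_ge a t) i \in rows_ge a t by apply: mem_nth.
rewrite mem_filter => /andP[_ /mem_leq_sumn]; lia.
Qed.

Lemma psiN_ge a N : sumn a <= N -> psiN a N = psi_list a.
Proof.
move=> h; rewrite /psiN /psi_list -(subnKC h) iotaD map_cat flatten_cat.
set d := N - sumn a.
have -> : flatten [seq psi_col a t | t <- iota (1 + sumn a) d] = [::].
  have : sumn a < 1 + sumn a by lia.
  elim: d (1 + sumn a) => //= d IH m hm.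
  rewrite psi_col_nil; last by lia.
  by rewrite IH //; lia.
by rewrite cats0.
Qed.

Lemma mcells1 a : allpos a -> mcells a 1 = size a.
Proof.
rewrite /mcells; elim: a => //= x s IH /andP[hx hs]; rewrite IH //; lia.
Qed.

Lemma psi_col1 a : allpos a -> psi_col a 1 = col1 a.
Proof.
move=> h; rewrite /psi_col mcells1 //.
have -> : rows_ge a 1 = a by apply/all_filterP.
by [].
Qed.

Lemma mcellsS a t : allpos a -> mcells a t.+1 = size a + mcells (shrink a) t.
Proof.
rewrite /mcells /shrink; elim: a => //= x s IH /andP[hx hs].
rewrite IH //; case: x hx => // -[|y] _ /=; first by lia.
rewrite minnSS; lia.
Qed.

Lemma size_rows_le s t : 0 < t -> size (rows_ge s t) <= mcells s t.
Proof.
rewrite /rows_ge /mcells => ht; elim: s => //= x s IH.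
case: ifP => /= h; lia.
Qed.

Lemma rows_ge_shrink a t : 0 < t ->
  rows_ge (shrink a) t = map predn (rows_ge a t.+1).
Proof.
move=> ht; rewrite /rows_ge /shrink filter_map -filter_predI.
congr map; apply: eq_filter => x /=; lia.
Qed.

Lemma psi_colS a t : allpos a -> 0 < t ->
  psi_col a t.+1 = map (addn (size a)) (psi_col (shrink a) t).
Proof.
move=> ha ht; rewrite /psi_col rows_ge_shrink // size_map -map_comp mcellsS //.
have hle := size_rows_le (shrink a) ht; rewrite rows_ge_shrink // size_map in hle.
set r := rows_ge a t.+1 in hle *.
have -> : [seq i <- iota 0 (size r) | t < nth 0 [seq i.-1 | i <- r] i]
        = [seq i <- iota 0 (size r) | t.+1 < nth 0 r i].
  apply: eq_in_filter => i; rewrite mem_iota /= => hi.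
  rewrite (nth_map 0) //; lia.
apply/eq_in_map => i; rewrite mem_filter mem_iota /= => /andP[_ hi]; lia.
Qed.

Lemma sumn_shrink a : allpos a -> sumn a = size a + sumn (shrink a).
Proof.
rewrite /shrink; elim: a => //= x s IH /andP[hx hs]; rewrite IH //.
case: x hx => // -[|y] _ //=; lia.
Qed.

Lemma psi_rec a : allpos a ->
  psi_list a = col1 a ++ map (addn (size a)) (psi_list (shrink a)).
Proof.
move=> ha; rewrite -(psiN_ge (leqnSn (sumn a))) /psiN /= psi_col1 //.
congr cat; rewrite -(addn1 1) iotaDl -map_comp.
have -> : [seq (psi_col a \o addn 1) i | i <- iota 1 (sumn a)] =
   [seq map (addn (size a)) (psi_col (shrink a) t) | t <- iota 1 (sumn a)].
  by apply/eq_in_map => t; rewrite mem_iota => /andP[ht _] /=; rewrite add1n psi_colS.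
rewrite -[psi_list (shrink a)](@psiN_ge _ (sumn a)); last by rewrite (sumn_shrink ha); lia.
by rewrite /psiN map_flatten allpairs_mapl.
Qed.


Lemma allpos_shrink a : allpos (shrink a).
Proof.
rewrite /allpos /shrink all_map; apply/allP => x; rewrite mem_filter /=; lia.
Qed.

Lemma size_shrink a : size (shrink a) = count (fun x => 1 < x) a.
Proof. by rewrite /shrink size_map size_filter. Qed.

Lemma sumn_ge_size a : allpos a -> size a <= sumn a.
Proof. elim: a => //= x s IH /andP[hx hs]; have := IH hs; lia. Qed.

Lemma col1_cons x s : col1 (x :: s) =
  (if 1 < x then [:: (size s).+1] else [::]) ++ col1 s.
Proof.
rewrite /col1 /=.
have -> : iota 1 (size s) = map (addn 1) (iota 0 (size s)) by rewrite -iotaDl.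
rewrite filter_map (@eq_filter _ _ (fun i => 1 < nth 0 s i)); last by [].
case: ifP => _ /=; rewrite ?subn0 -map_comp; try congr cons;
  apply/eq_in_map => i; rewrite mem_filter mem_iota /=; lia.
Qed.

Lemma col1_le a x : x \in col1 a -> 0 < x <= size a.
Proof.
elim: a => //= y s IH; rewrite col1_cons mem_cat.
case/orP; last by move/IH; lia.
by case: ifP => // _; rewrite inE => /eqP->; lia.
Qed.

Lemma uniq_col1 a : uniq (col1 a).
Proof.
elim: a => //= y s IH; rewrite col1_cons; case: ifP => //= _; rewrite IH andbT.
by apply/negP => /col1_le; lia.
Qed.

Lemma size_col1 a : size (col1 a) = count (fun x => 1 < x) a.
Proof.
elim: a => //= y s IH; rewrite col1_cons size_cat IH; case: ifP => //=.
Qed.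

Lemma mem_col1 a i : i < size a -> (size a - i \in col1 a) = (1 < nth 0 a i).
Proof.
elim: a i => //= y s IH [|i] hi; rewrite col1_cons mem_cat.
  case: ifP => h /=; first by rewrite inE eqxx.
  by apply/negP => /col1_le; lia.
rewrite -IH; last by lia.
case: ifP => _ /=; last by rewrite subSS.
rewrite inE subSS; case: eqP => //=; lia.
Qed.

Lemma col1_gt a x : allpos a -> x \in col1 a -> size a < sumn a.
Proof.
move=> ha hx; rewrite (sumn_shrink ha).
have := sumn_ge_size (allpos_shrink a); rewrite size_shrink -size_col1.
by case: (col1 a) hx => //= *; lia.
Qed.

Lemma shrink_ind (P : seq nat -> Prop) :
  (forall a, allpos a -> (a != [::] -> P (shrink a)) -> P a) ->
  forall a, allpos a -> P a.
Proof.
move=> H a; move: {2}(sumn a).+1 (ltnSn (sumn a)) => N.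
elim: N a => // N IH a hN ha; apply: H => // ne.
apply: IH; last exact: allpos_shrink.
move: (sumn_shrink ha); case: a ne hN ha => //= x s _ hN /andP[hx _]; lia.
Qed.

Lemma psi_range a : allpos a -> forall x, x \in psi_list a -> 0 < x < sumn a.
Proof.
elim/shrink_ind => {}a ha IH x; rewrite psi_rec // mem_cat.
case/orP=> [hx|]; first by have := col1_gt ha hx; have := col1_le hx; lia.
case/mapP => y hy ->.
case: a ha IH hy => [|z s] ha IH; first by rewrite psi_rec.
have := IH isT y; rewrite (sumn_shrink ha); lia.
Qed.

Lemma size_psi a : allpos a -> size (psi_list a) = sumn a - size a.
Proof.
elim/shrink_ind => {}a ha IH; rewrite psi_rec // size_cat size_map size_col1.
case: a ha IH => [|z s] ha IH; first by rewrite psi_rec.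
rewrite IH // (sumn_shrink ha).
have := sumn_ge_size (allpos_shrink (z :: s)); rewrite size_shrink; lia.
Qed.

Lemma uniq_psi a : allpos a -> uniq (psi_list a).
Proof.
elim/shrink_ind => {}a ha IH; rewrite psi_rec // cat_uniq uniq_col1 /=.
case: a ha IH => [|z s] ha IH; first by rewrite psi_rec.
rewrite map_inj_uniq ?IH ?andbT //; last exact: addnI.
apply/hasP => -[x /mapP[y hy ->] /col1_le].
have := psi_range (allpos_shrink (z :: s)) hy; lia.
Qed.


Lemma mem_psi_low a x : allpos a -> x <= size a -> (x \in psi_list a) = (x \in col1 a).
Proof.
move=> ha hx; rewrite psi_rec // mem_cat; case: (x \in col1 a) => //=.
apply/negP => /mapP[y hy e]; have := psi_range (allpos_shrink a) hy; lia.
Qed.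

Lemma mem_psi_high a y : allpos a -> 0 < y ->
  (size a + y \in psi_list a) = (y \in psi_list (shrink a)).
Proof.
move=> ha hy; rewrite psi_rec // mem_cat mem_map; last exact: addnI.
case: (boolP (_ \in col1 a)) => //= /col1_le; lia.
Qed.

Lemma combine a b : allpos a -> allpos b -> size a = size b ->
  (forall i, i < size a -> (1 < nth 0 a i) = (1 < nth 0 b i)) ->
  shrink a = shrink b -> a = b.
Proof.
elim: a b => [|x s IH] [|y t] //= /andP[hx hs] /andP[hy ht] [e] h.
have h0 := h 0 isT; rewrite /= in h0.
rewrite /shrink /=; rewrite h0; case: ifP => hxy /=.
  case=> e1 e2; congr cons; first by lia.
  apply: IH => //; first by move=> i hi; apply: (h i.+1).
have -> : x = y by lia.
move=> e2; congr cons; apply: IH => //; by move=> i hi; apply: (h i.+1).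
Qed.

Lemma psi_inj a b : allpos a -> allpos b -> sumn a = sumn b ->
  psi_list a =i psi_list b -> a = b.
Proof.
move=> ha; move: a ha b.
apply: (@shrink_ind (fun a => forall b, allpos b -> sumn a = sumn b -> psi_list a =i psi_list b -> a = b)).
move=> a ha IH b hb es ep.
have hsz : size a = size b.
  have := perm_size (uniq_perm (uniq_psi ha) (uniq_psi hb) ep).
  rewrite !size_psi //; have := sumn_ge_size ha; have := sumn_ge_size hb; lia.
case: a ha IH es ep hsz => [|x s] ha IH es ep hsz.
  by case: b hb es ep hsz.
apply: combine => //.
  move=> i hi; rewrite -!mem_col1 -?hsz //.
  by rewrite -!mem_psi_low -?hsz ?ep //; lia.
apply: IH => //; first exact: allpos_shrink.
  have := sumn_shrink ha; have := sumn_shrink hb; lia.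
move=> y; case: y => [|y].
  apply/idP/idP => /psi_range; [move/(_ (allpos_shrink _))|move/(_ (allpos_shrink _))]; lia.
by rewrite -mem_psi_high // ep hsz mem_psi_high.
Qed.


Fixpoint coinvR (a : seq nat) : nat :=
  if a is x :: s then count (fun y => x < y) s + coinvR s else 0.
Fixpoint bR (a : seq nat) : nat :=
  if a is x :: s then sumn [seq minn x y | y <- s] + bR s else 0.
Fixpoint pR (a : seq nat) : nat :=
  if a is x :: s then (if x <= 1 then count (fun y => 1 < y) s else 0) + pR s else 0.

Lemma sum_nth (F : nat -> nat) s :
  \sum_(j < size s) F (nth 0 s j) = \sum_(y <- s) F y.
Proof. by rewrite (big_nth 0) big_mkord. Qed.

Lemma sum_count (p : pred nat) s : \sum_(y <- s) (p y : nat) = count p s.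
Proof. by elim: s => [|y s IH]; rewrite ?big_nil ?big_cons ?IH. Qed.

Lemma coinvE a : coinv a = coinvR a.
Proof.
rewrite /coinv; elim: a => [|x s IH]; first by rewrite big_ord0.
rewrite /= big_ord_recl /= -IH; congr addn.
  rewrite big_mkcond big_ord_recl /= add0n.
  rewrite -(sum_count (fun y => x < y)) -sum_nth.
  by apply: eq_bigr => j _.
apply: eq_bigr => i _; rewrite big_mkcond big_ord_recl /= add0n.
by rewrite [in RHS]big_mkcond; apply: eq_bigr.
Qed.

Lemma bR_double s : 2 * bR s + sumn s = \sum_(x <- s) \sum_(y <- s) minn x y.
Proof.
elim: s => [|x s IH]; first by rewrite big_nil.
rewrite big_cons !big_cons /= minnn.
have E : \sum_(j <- s) \sum_(y <- x :: s) minn j y =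
   \sum_(j <- s) minn x j + \sum_(j <- s) \sum_(y <- s) minn j y.
  rewrite -big_split /=; apply: eq_bigr => j _; by rewrite big_cons minnC.
rewrite E -IH.
have -> : sumn [seq minn x y | y <- s] = \sum_(y <- s) minn x y by rewrite sumnE big_map.
lia.
Qed.

Lemma bR_perm s t : perm_eq s t -> bR s = bR t.
Proof.
move=> p; have := bR_double s; have := bR_double t.
have -> : \sum_(x <- s) \sum_(y <- s) minn x y = \sum_(x <- t) \sum_(y <- t) minn x y.
  by rewrite (perm_big _ p); apply: eq_bigr => x _; apply: perm_big.
rewrite (perm_sumn p) => h1 h2.
have : 2 * bR s + sumn t = 2 * bR t + sumn t by rewrite h1 h2.
lia.
Qed.

Lemma bR_sorted s : sorted geq s -> bR s = \sum_(i < size s) i * nth 0 s i.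
Proof.
elim: s => [|x s IH]; first by rewrite big_ord0.
move=> hs; rewrite /= big_ord_recl /= mul0n add0n IH; last exact: path_sorted hs.
have hx : all (geq x) s by apply: order_path_min hs => a b c h1 h2; lia.
have -> : [seq minn x y | y <- s] = s.
  elim: s hx {IH hs} => //= y s IH /andP[h1 h2]; rewrite IH //; congr cons; lia.
rewrite sumnE -sum_nth -big_split /=; apply: eq_bigr => i _.
rewrite /bump /= add0n; lia.
Qed.

Lemma bstatE a : bstat a = bR a.
Proof.
rewrite /bstat /= -bR_sorted; last by apply: sort_sorted => x y; apply: leq_total.
by apply: bR_perm; rewrite perm_sort.
Qed.

Lemma bR_shrink a : allpos a -> bR a = 'C(size a, 2) + bR (shrink a).
Proof.
elim: a => [|x s IH] //= /andP[hx hs]; rewrite IH // binS bin1.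
rewrite /shrink /=; case: ifP => h /=.
  have -> : sumn [seq minn x y | y <- s] =
     size s + sumn [seq minn x.-1 y | y <- [seq y.-1 | y <- s & 1 < y]].
    elim: s hs {IH} => //= y s IH /andP[hy hs]; rewrite IH //.
    case: ifP => hy' /=; lia.
  lia.
have -> : sumn [seq minn x y | y <- s] = size s.
  elim: s hs {IH} => //= y s IH /andP[hy hs]; rewrite IH //; lia.
lia.
Qed.

Lemma coinvR_shrink a : allpos a -> coinvR a = coinvR (shrink a) + pR a.
Proof.
elim: a => [|x s IH] //= /andP[hx hs]; rewrite IH //.
rewrite /shrink /=; case: ifP => h /=.
  have -> : count (fun y => x < y) s = count (fun y => x.-1 < y) [seq y.-1 | y <- s & 1 < y].
    elim: s hs {IH} => //= y s IH /andP[hy hs]; rewrite IH //.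
    case: ifP => hy' /=; lia.
  case: ifP => h'; lia.
have -> : x <= 1 by lia.
have -> : count (fun y => x < y) s = count (fun y => 1 < y) s.
  by apply: eq_count => y; have -> : x = 1 by lia.
lia.
Qed.

Lemma col1_identity a :
  sumn (col1 a) + pR a + 'C(count (fun x => 1 < x) a, 2) = count (fun x => 1 < x) a * size a.
Proof.
elim: a => [|x s IH] //=; rewrite col1_cons sumn_cat.
case: ifP => h /=.
  have -> : x <= 1 = false by lia.
  rewrite add1n binS bin1; lia.
have -> : x <= 1 = true by lia.
rewrite !add0n; lia.
Qed.

Lemma bin2D m k : 'C(m + k, 2) = 'C(m, 2) + 'C(k, 2) + m * k.
Proof.
elim: k => [|k IH]; first by rewrite addn0 bin0n /=; lia.
rewrite addnS !binS !bin1 IH; lia.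
Qed.

Lemma sumn_addmap l s : sumn (map (addn l) s) = l * size s + sumn s.
Proof. elim: s => //= [|y s IH]; [lia| rewrite IH; lia]. Qed.

Lemma stat_psi a : allpos a ->
  2 * bR a + coinvR a + sumn (psi_list a) = 'C(sumn a, 2) + 'C(size a, 2).
Proof.
elim/shrink_ind => {}a ha IH.
case: a ha IH => [|z s] ha IH; first by rewrite psi_rec.
set a := z :: s in ha IH *.
rewrite psi_rec // sumn_cat sumn_addmap bR_shrink // coinvR_shrink //.
have I1 := IH isT; have I2 := col1_identity a.
rewrite size_psi ?allpos_shrink // (sumn_shrink ha) bin2D.
have hk := sumn_ge_size (allpos_shrink a).
rewrite size_shrink in hk I1 *.
set k := count _ a in hk I1 I2 *.
set n' := sumn (shrink a) in hk I1 *.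
set l := size a in I2 *.
rewrite mulnBr.
have : l * k <= l * n' by apply: leq_mul.
rewrite (mulnC k l) in I2.
lia.
Qed.


Fixpoint compL n : seq (seq nat) :=
  if n is m.+1 then [seq 1 :: a | a <- compL m] ++
     [seq (head 0 a).+1 :: behead a | a <- compL m & a != [::]]
  else [:: [::]].

Lemma is_compE n a : is_comp n a = all (fun x => 0 < x) a && (sumn a == n).
Proof. by []. Qed.

Lemma mem_compL n a : (a \in compL n) = is_comp n a.
Proof.
elim: n a => [|m IH] a.
  rewrite inE is_compE; case: a => //= x s; apply/esym/negP => /andP[/andP[hx _]]; lia.
rewrite /= mem_cat; apply/idP/idP.
  case/orP => /mapP[b hb ->].
    move: hb; rewrite IH !is_compE /=; move=> /andP[h1 h2]; rewrite h1 (eqP h2) add1n eqxx; done.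
  move: hb; rewrite mem_filter IH; case: b => //= x s.
  rewrite /is_comp /= => H; case/andP: H => H hsum; case/andP: H => _ hs.
  rewrite hs /=; move/eqP: hsum; lia.
rewrite is_compE; case: a => //= x s /andP[h hsum]; case/andP: h => hx hs; move/eqP: hsum => hsum.
case: x hx hsum => // -[|x] _ hsum.
  apply/orP; left; apply/mapP; exists s => //; rewrite IH is_compE hs /=; apply/eqP; lia.
apply/orP; right; apply/mapP; exists (x.+1 :: s) => //.
rewrite mem_filter /= IH is_compE /= hs /=; apply/eqP; lia.
Qed.

Lemma uniq_compL n : uniq (compL n).
Proof.
elim: n => [|m IH] //=; rewrite cat_uniq map_inj_uniq ?IH //; last by move=> x y [].
have -> : uniq [seq (head 0 a).+1 :: behead a | a <- compL m & a != [::]].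
  rewrite map_inj_in_uniq ?filter_uniq //.
  move=> x y; rewrite !mem_filter; case: x => // x s; case: y => // y t _ _ /= [-> ->] //.
rewrite andbT.
apply/hasPn => b /mapP[c]; rewrite mem_filter mem_compL; case: c => //= x s hc ->.
apply/negP => /mapP[d hd [e _]].
move: hc; rewrite /is_comp /= => H; case/andP: H => H _; case/andP: H => hx _; lia.
Qed.

Lemma size_compL m : size (compL m.+1) = 2 ^ m.
Proof.
elim: m => [|m IH] //.
rewrite [compL m.+2]/= size_cat !size_map IH.
have -> : [seq a <- compL m.+1 | a != [::]] = compL m.+1.
  apply/all_filterP/allP => a; rewrite mem_compL; case: a => //.
rewrite IH expnS; lia.
Qed.


Lemma card_Psi m (L : seq nat) : uniq L -> (forall x, x \in L -> x < m.+1) ->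
  #|[set i : 'I_m.+1 | val i \in L]| = size L /\
  \sum_(i in [set i : 'I_m.+1 | val i \in L]) val i = sumn L.
Proof.
move=> uL hL; set L' := [seq inord x : 'I_m.+1 | x <- L].
have eL : [set i : 'I_m.+1 | val i \in L] =i L'.
  move=> i; rewrite inE; apply/idP/mapP.
    by move=> h; exists (val i) => //; rewrite inord_val.
  by case=> x hx ->; rewrite /= inordK ?hL.
have uL' : uniq L'.
  rewrite map_inj_in_uniq // => x y hx hy e.
  by rewrite -(inordK (hL _ hx)) -(inordK (hL _ hy)) e.
split.
  by rewrite (eq_card eL) (card_uniqP uL') size_map.
rewrite (eq_bigl _ _ eL) -big_uniq // big_map sumnE.
by apply: eq_big_seq => x hx; rewrite /= inordK ?hL.
Qed.

Lemma int_stat (b c S N l : nat) : 2 * b + c + S = N + l ->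
  (2 * b%:Z - l%:Z + c%:Z = N%:Z - S%:Z)%R.
Proof. move=> h; lia. Qed.


Lemma sum_tuples (R : comNzRingType) l N (F : seq nat -> R) :
  (\sum_(t : l.-tuple 'I_N.+1 | is_comp N (map val t)) F (map val t)
   = \sum_(a <- compL N | size a == l) F a)%R.
Proof.
rewrite -[RHS]big_filter.
rewrite (perm_big (map (fun t : l.-tuple 'I_N.+1 => map val t)
   (filter (fun t : l.-tuple 'I_N.+1 => is_comp N (map val t)) (index_enum _)))); last first.
  apply: uniq_perm.
  - by rewrite filter_uniq ?uniq_compL.
  - rewrite map_inj_in_uniq ?filter_uniq ?index_enum_uniq //.
    by move=> t1 t2 _ _ /(inj_map val_inj) /val_inj.
  move=> a; apply/idP/mapP; last first.
    case=> t; rewrite !mem_filter => /andP[ht _] ->.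
    by rewrite size_map size_tuple eqxx mem_compL ht.
  rewrite mem_filter mem_compL => /andP[/eqP sz ca].
  have ea : map val (map (@inord N) a) = a.
    rewrite -map_comp; apply: map_id_in => x hx /=; rewrite inordK //.
    have := mem_leq_sumn hx; move: ca; rewrite /is_comp => /andP[_ /eqP ->]; lia.
  have hs : size (map (@inord N) a) == l by rewrite size_map sz.
  exists (Tuple hs) => //.
  by rewrite mem_filter mem_index_enum andbT /= ea.
by rewrite big_map big_filter.
Qed.

Lemma sum_sizes (R : comNzRingType) N (F : seq nat -> R) :
  (\sum_(l < N.+2) \sum_(a <- compL N.+1 | size a == l) F a
   = \sum_(a <- compL N.+1) F a)%R.
Proof.
under eq_bigr => l _ do rewrite big_mkcond.
rewrite exchange_big; apply: eq_big_seq => a ha.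
rewrite -big_mkcond /=.
have hsz : size a < N.+2.
  move: ha; rewrite mem_compL /is_comp => /andP[ha hs]; move/eqP: hs => hs.
  by have := sumn_ge_size ha; move=> h; rewrite ltnS -hs.
rewrite (big_pred1 (Ordinal hsz)) // => l /=.
Qed.

Unset Implicit Arguments.

Theorem theorem1p5 (n : nat) (n_gt0 : 0 < n) :
  (* Psi_n maps compositions of n into subsets of [n-1] *)
  (forall a : seq nat, is_comp n a ->
     forall x, x \in psi_list a -> 0 < x < n)
  (* injective on compositions of n *)
  /\ (forall a b : seq nat, is_comp n a -> is_comp n b ->
        Psi n a = Psi n b -> a = b)
  (* surjective onto subsets of [n-1] = {1,...,n-1} *)
  /\ (forall I : {set 'I_n}, (forall i : 'I_n, i \in I -> 0 < val i) ->
        exists a : seq nat, is_comp n a /\ Psi n a = I)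
  (* statistics *)
  /\ (forall (a : seq nat) (I : {set 'I_n}), is_comp n a -> Psi n a = I ->
        n - size a = #|I|
        /\ (2 * (bstat a)%:Z - ('C(size a, 2))%:Z + (coinv a)%:Z
            = ('C(n, 2))%:Z - (\sum_(i in I) (val i))%:Z)%R)
  (* generating function identity, in any commutative ring *)
  /\ (forall (R : comNzRingType) (z q : R),
        (\sum_(l < n.+1) \sum_(t : l.-tuple 'I_n.+1 | is_comp n (map val t))
            z ^+ (n - l)%N * q ^+ (2 * bstat (map val t) + coinv (map val t) - 'C(l, 2))%N
         = \sum_(I : {set 'I_n} | [forall i in I, (0 < val i)%N])
            z ^+ #|I| * q ^+ ('C(n, 2) - \sum_(i in I) val i)%N)%R).
Proof.
case: n n_gt0 => // m _.
have compP a : is_comp m.+1 a -> allpos a /\ sumn a = m.+1.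
  by rewrite /is_comp => /andP[ha hs]; move/eqP: hs.
have RNG a : is_comp m.+1 a -> forall x, x \in psi_list a -> 0 < x < m.+1.
  by move=> /compP[ha <-]; apply: psi_range.
have CP a : is_comp m.+1 a -> #|Psi m.+1 a| = size (psi_list a) /\
    \sum_(i in Psi m.+1 a) val i = sumn (psi_list a).
  move=> ca; have [ha _] := compP a ca.
  apply: card_Psi; first exact: uniq_psi.
  by move=> x /(RNG a ca) /andP[].
have INJ a b : is_comp m.+1 a -> is_comp m.+1 b -> Psi m.+1 a = Psi m.+1 b -> a = b.
  move=> ca cb e; have [ha sa] := compP a ca; have [hb sb] := compP b cb.
  apply: psi_inj => //; first by rewrite sa sb.
  move=> x; case: (ltnP x m.+1) => hx.
    by move/setP: e => /(_ (Ordinal hx)); rewrite /Psi !inE.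
  apply/idP/idP => [/(RNG a ca)|/(RNG b cb)]; lia.
have STAT a : is_comp m.+1 a -> m.+1 - size a = #|Psi m.+1 a| /\
    2 * bstat a + coinv a + \sum_(i in Psi m.+1 a) val i = 'C(m.+1, 2) + 'C(size a, 2).
  move=> ca; have [ha sa] := compP a ca; have [c1 c2] := CP a ca.
  rewrite c1 c2 size_psi // sa; split => //.
  by rewrite bstatE coinvE -sa stat_psi.
pose P := [pred I : {set 'I_m.+1} | [forall i in I, 0 < val i]].
have cardP : #|P| = 2 ^ m.
  have -> : #|P| = #|powerset [set~ (ord0 : 'I_m.+1)]|.
    apply: eq_card => I; rewrite !inE.
    apply/forall_inP/subsetP => h i hi.
      by move: (h i hi); rewrite !inE; case: i hi => -[|k] hk.
    by move: (h i hi); rewrite !inE; case: i hi => -[|k] hk.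
  by rewrite card_powerset cardsC1 card_ord.
pose s1 := map (Psi m.+1) (compL m.+1).
have u1 : uniq s1.
  rewrite map_inj_in_uniq ?uniq_compL // => a b; rewrite !mem_compL; exact: INJ.
have sub : {subset s1 <= enum P}.
  move=> I /mapP[a ha ->]; rewrite mem_enum inE; apply/forall_inP => i.
  rewrite inE => hi; move: ha; rewrite mem_compL => ca.
  by have /andP[] := RNG a ca _ hi.
have sz : size (enum P) <= size s1 by rewrite -cardE cardP size_map size_compL.
have [_ eq12] := uniq_min_size u1 sub sz.
have SURJ (I : {set 'I_m.+1}) : (forall i : 'I_m.+1, i \in I -> 0 < val i) ->
    exists a, is_comp m.+1 a /\ Psi m.+1 a = I.
  move=> hI; have : I \in enum P by rewrite mem_enum inE; apply/forall_inP.
  rewrite -eq12 => /mapP[a ha ->]; exists a; split => //; by rewrite -mem_compL.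
split; first exact: RNG.
split; first exact: INJ.
split; first exact: SURJ.
split.
  move=> a I ca <-; have [s1' s2'] := STAT a ca; split => //.
  by apply: int_stat; rewrite s2'.
move=> R z q.
pose F := fun a : seq nat => (z ^+ (m.+1 - size a) *
   q ^+ (2 * bstat a + coinv a - 'C(size a, 2)))%R.
transitivity (\sum_(a <- compL m.+1) F a)%R.
  rewrite -sum_sizes; apply: eq_bigr => l _.
  rewrite -sum_tuples; apply: eq_bigr => t _.
  by rewrite /F size_map size_tuple.
rewrite (eq_bigl (fun I => I \in P)); last by move=> I; rewrite inE.
rewrite -big_enum -(perm_big _ (uniq_perm u1 (enum_uniq P) eq12)) big_map.
apply: eq_big_seq => a; rewrite mem_compL => ca.
have [e1 e2] := STAT a ca.
rewrite /F e1; congr (_ * _)%R; congr (_ ^+ _)%R; lia.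
Qed.
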